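(* For every $k\ge2$ one has $[D^{(k)}_x,D^{(k)}_y]=0$ on $\mathcal E_k$, and also $[D^{( * )}_x,D^{( * )}_y]=0$ on $\mathcal E_*$.
   Context: Let $\mathcal E_1$ be the system $u_y+vu_x=\frac1{v-u}$, $v_y+uv_x=\frac1{u-v}$ with internal coordinates $x,y,u_i=\partial^iu/\partial x^i$, $v_i=\partial^iv/\partial x^i$ ($i\ge0$) and total derivatives $D_x=\partial_x+\sum_i(u_{i+1}\partial_{u_i}+v_{i+1}\partial_{v_i})$, $D_y=\partial_y+\sum_i\big(D_x^i(\tfrac1{v-u}-vu_1)\partial_{u_i}+D_x^i(\tfrac1{u-v}-uv_1)\partial_{v_i}\big)$. Let $\sigma_m=\sum_{i+j=m}u^iv^j$, $\psi^{(1)}=y$, $\psi^{(2)}=x$, and let $\psi^{(k)}$, $k\ge3$, be new coordinates; for $k\ge2$ put $X^{(k)}=\sigma_{k-2}-\sum_{i=1}^{k-3}i\,\sigma_{k-i-3}\psi^{(i)}$ and for $k\ge3$ put $Y^{(k)}=-uv\,X^{(k-1)}-(k-2)\psi^{(k-2)}$. For $k\ge2$, $\mathcal E_k=\mathcal E_1\times\mathbb R^{k-1}$ has the additional coordinates $\psi^{(3)},\dots,\psi^{(k+1)}$ and the vector fields $D^{(k)}_x=D_x+\sum_{i=3}^{k+1}X^{(i)}\partial/\partial\psi^{(i)}$, $D^{(k)}_y=D_y+\sum_{i=3}^{k+1}Y^{(i)}\partial/\partial\psi^{(i)}$; $\mathcal E_*$ is the inverse limit (all $\psi^{(k)}$,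 $k\ge3$) with $D^{( * )}_x,D^{( * )}_y$ defined by the infinite sums. *)

(* Defs.v *)
From mathcomp Require Import all_boot all_order all_algebra.
Set Implicit Arguments. Unset Strict Implicit. Unset Printing Implicit Defensive.
Import Order.TTheory GRing.Theory Num.Theory.
Local Open Scope ring_scope.

Section Defs.
Variable A : comUnitRingType.

Definition sigma (u0 v0 : A) (m : nat) : A :=
  \sum_(i < m.+1) u0 ^+ i * v0 ^+ (m - i).

Definition Psi (x y : A) (ps : nat -> A) (k : nat) : A :=
  if k == 1%N then y else if k == 2%N then x else ps k.

Definition Xk (x y u0 v0 : A) (ps : nat -> A) (k : nat) : A :=
  sigma u0 v0 (k - 2) -
  \sum_(1 <= i < k - 2) i%:R * sigma u0 v0 (k - i - 3) * Psi x y ps i.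

Definition Yk (x y u0 v0 : A) (ps : nat -> A) (k : nat) : A :=
  - (u0 * v0) * Xk x y u0 v0 ps (k - 1) - (k - 2)%:R * Psi x y ps (k - 2).

Definition derivation (D : A -> A) : Prop :=
  (forall a b, D (a + b) = D a + D b) /\
  (forall a b, D (a * b) = D a * b + a * D b).

(* Dx, Dy act on the coordinate functions x, y, u_i, v_i, psi^(k) (k in P)
   exactly as the vector fields D_x^(.) and D_y^(.) of the paper do. *)
Definition total_derivatives (P : nat -> bool) (x y : A) (u v ps : nat -> A)
  (Dx Dy : A -> A) : Prop :=
  [/\ derivation Dx /\ derivation Dy,
      (v 0%N - u 0%N) \is a GRing.unit,
      [/\ Dx x = 1, Dx y = 0, Dy x = 0 & Dy y = 1],
      [/\ forall i, Dx (u i) = u i.+1,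
          forall i, Dx (v i) = v i.+1,
          forall i, Dy (u i) = iter i Dx ((v 0%N - u 0%N)^-1 - v 0%N * u 1%N) &
          forall i, Dy (v i) = iter i Dx ((u 0%N - v 0%N)^-1 - u 0%N * v 1%N)] &
      forall k, P k ->
        Dx (ps k) = Xk x y (u 0%N) (v 0%N) ps k /\
        Dy (ps k) = Yk x y (u 0%N) (v 0%N) ps k].

Definition commute_on_coords (P : nat -> bool) (x y : A) (u v ps : nat -> A)
  (Dx Dy : A -> A) : Prop :=
  [/\ Dx (Dy x) = Dy (Dx x), Dx (Dy y) = Dy (Dx y),
      forall i, Dx (Dy (u i)) = Dy (Dx (u i)),
      forall i, Dx (Dy (v i)) = Dy (Dx (v i)) &
      forall k, P k -> Dx (Dy (ps k)) = Dy (Dx (ps k))].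

End Defs.

Definition Ek_index (k : nat) : nat -> bool := fun i => (3 <= i <= k.+1)%N.
Definition Estar_index : nat -> bool := fun i => (3 <= i)%N.

(* Main.v *)
Require Import Defs.
From mathcomp Require Import all_boot all_order all_algebra.
From mathcomp Require Import ring zify.
Set Implicit Arguments. Unset Strict Implicit. Unset Printing Implicit Defensive.
Import GRing.Theory.
Local Open Scope ring_scope.

Section Der.
Variable A : comUnitRingType.
Variable D : A -> A.
Hypothesis hD : derivation D.

Lemma DD a b : D (a + b) = D a + D b. Proof. exact: hD.1. Qed.
Lemma DM a b : D (a * b) = D a * b + a * D b. Proof. exact: hD.2. Qed.
Lemma D0 : D 0 = 0.
Proof. have := DD 0 0; rewrite addr0 => /eqP; rewrite -subr_eq subrr eq_sym => /eqP //. Qed.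
Lemma DN a : D (- a) = - D a.
Proof. have := DD a (-a); rewrite subrr D0 => /eqP; rewrite eq_sym addr_eq0 => /eqP H.
by rewrite H opprK. Qed.
Lemma D1 : D 1 = 0.
Proof. have := DM 1 1; rewrite !mulr1 mul1r => /eqP; rewrite -subr_eq subrr eq_sym => /eqP //. Qed.
Lemma Dnat n : D n%:R = 0.
Proof. elim: n => [|n IH]; first exact: D0. by rewrite -addn1 natrD DD IH D1 addr0. Qed.
End Der.

Section Main.
Variable A : comUnitRingType.
Variables (x y : A) (u v ps : nat -> A) (Dx Dy : A -> A).
Local Notation U := (u 0%N).
Local Notation V := (v 0%N).
Local Notation s := (sigma U V).
Local Notation X := (Xk x y U V ps).
Local Notation Y := (Yk x y U V ps).
Local Notation Ps := (Psi x y ps).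

Lemma sigma0 : s 0 = 1.
Proof. by rewrite /sigma big_ord1 /= !expr0 mulr1. Qed.

Lemma sigmaS m : s m.+1 = U * s m + V ^+ m.+1.
Proof.
rewrite /sigma big_ord_recl /= expr0 mul1r subn0 addrC mulr_sumr; congr (_ + _).
by apply: eq_bigr => i _; rewrite /bump /= add1n subSS exprS mulrA.
Qed.

Lemma sigma1 : s 1 = U + V.
Proof. by rewrite sigmaS sigma0 mulr1 expr1. Qed.

Lemma sigmaSS m : s m.+2 = (U + V) * s m.+1 - U * V * s m.
Proof. rewrite !sigmaS (exprS V m.+1); set w := V ^+ m.+1; ring. Qed.

Definition T n := \sum_(1 <= i < n) i%:R * s (n.+2 - i - 3) * Ps i.

Lemma T0 n : T n = \sum_(0 <= i < n) i%:R * s (n.+2 - i - 3) * Ps i.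
Proof.
case: n => [|n]; first by rewrite /T !big_geq.
by rewrite /T [RHS]big_ltn // mul0r mul0r add0r.
Qed.

Lemma XT n : X n.+2 = s n - T n.
Proof. by rewrite /Xk /T subn2. Qed.

Lemma TSS n : T n.+2 = (U + V) * T n.+1 - U * V * T n + n.+1%:R * Ps n.+1.
Proof.
rewrite !T0 !big_nat_recr //=.
have -> : (n.+4 - n.+1 - 3 = 0)%N by lia.
have -> : (n.+4 - n - 3 = 1)%N by lia.
rewrite sigma0 sigma1.
have -> : \sum_(0 <= i < n) i%:R * s (n.+4 - i - 3) * Ps i =
   \sum_(0 <= i < n) ((U + V) * (i%:R * s (n.+3 - i - 3) * Ps i)
                     - U * V * (i%:R * s (n.+2 - i - 3) * Ps i)).
  apply: eq_big_nat => i /andP [_ Hi].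
  have -> : (n.+4 - i - 3 = (n - i - 1).+2)%N by lia.
  have -> : (n.+3 - i - 3 = (n - i - 1).+1)%N by lia.
  have -> : (n.+2 - i - 3 = (n - i - 1))%N by lia.
  rewrite sigmaSS; ring.
rewrite big_split /= sumrN -!mulr_sumr; ring.
Qed.

Lemma Xrec n : X n.+4 = (U + V) * X n.+3 - U * V * X n.+2 - n.+1%:R * Ps n.+1.
Proof. rewrite !XT TSS sigmaSS; ring. Qed.

Lemma X2 : X 2 = 1.
Proof. by rewrite XT sigma0 /T big_geq // subr0. Qed.
Lemma X3 : X 3 = U + V.
Proof. by rewrite XT sigma1 /T big_geq // subr0. Qed.

Lemma Yval m : Y m.+3 = - (U * V) * X m.+2 - m.+1%:R * Ps m.+1.
Proof. by rewrite /Yk subn1 subn2. Qed.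

End Main.

Section Step.
Variable A : comUnitRingType.
Variables (x y : A) (u v ps : nat -> A) (Dx Dy : A -> A).
Local Notation U := (u 0%N).
Local Notation V := (v 0%N).
Local Notation X := (Xk x y U V ps).
Local Notation Y := (Yk x y U V ps).
Local Notation Ps := (Psi x y ps).
Hypothesis Dxd : derivation Dx.
Hypothesis Dyd : derivation Dy.
Hypothesis Hunit : (V - U) \is a GRing.unit.
Hypothesis Hxy : [/\ Dx x = 1, Dx y = 0, Dy x = 0 & Dy y = 1].
Hypothesis DxU : Dx U = u 1%N.
Hypothesis DxV : Dx V = v 1%N.
Hypothesis DyU : Dy U = (V - U)^-1 - V * u 1%N.
Hypothesis DyV : Dy V = (U - V)^-1 - U * v 1%N.
Variable N : nat.
Hypothesis hN : (3 <= N)%N.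
Hypothesis Hps : forall k, (3 <= k <= N)%N -> Dx (ps k) = X k /\ Dy (ps k) = Y k.

Lemma Dxx : Dx x = 1. Proof. by case: Hxy. Qed.
Lemma Dxy : Dx y = 0. Proof. by case: Hxy. Qed.
Lemma Dyx : Dy x = 0. Proof. by case: Hxy. Qed.
Lemma Dyy : Dy y = 1. Proof. by case: Hxy. Qed.

Lemma Ps1 : Ps 1 = y. Proof. reflexivity. Qed.
Lemma Ps2 : Ps 2 = x. Proof. reflexivity. Qed.

Lemma Dyp : Dy (U + V) = - (V * u 1%N + U * v 1%N).
Proof.
rewrite (DD Dyd) DyU DyV -[U - V]opprB invrN.
set w := (V - U)^-1; ring.
Qed.

Lemma Dyq : Dy (U * V) = 1 - V ^+ 2 * u 1%N - U ^+ 2 * v 1%N.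
Proof.
rewrite (DM Dyd) DyU DyV -[U - V]opprB invrN.
have hw : (V - U)^-1 * (V - U) = 1 by rewrite mulVr.
set w := (V - U)^-1 in hw *.
rewrite -hw; ring.
Qed.

Lemma DypM a : Dy ((U + V) * a) = - (V * u 1%N + U * v 1%N) * a + (U + V) * Dy a.
Proof. by rewrite (DM Dyd) Dyp. Qed.
Lemma DyqM a : Dy (U * V * a) = (1 - V ^+ 2 * u 1%N - U ^+ 2 * v 1%N) * a + U * V * Dy a.
Proof. by rewrite (DM Dyd) Dyq. Qed.

Lemma DxPsi j : (2 <= j <= N)%N -> Dx (Ps j) = X j.
Proof.
case: j => [|[|[|j]]] //= Hj.
  by rewrite Ps2 Dxx X2.
by rewrite /Psi /=; case: (Hps (k := j.+3)) => //.
Qed.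

Lemma DyPsi j : (3 <= j <= N)%N -> Dy (Ps j) = Y j.
Proof.
case: j => [|[|[|j]]] //= Hj.
by rewrite /Psi /=; case: (Hps (k := j.+3)) => //.
Qed.

Ltac pushD := rewrite ?(DyqM, DypM, Dyp, Dyq, DD Dyd, DN Dyd, DM Dyd, Dnat Dyd, D1 Dyd,
   DD Dxd, DN Dxd, DM Dxd, Dnat Dxd, D1 Dxd, DxU, DxV, Dxx, Dxy, Dyx, Dyy).

Definition E k := Dy (X k) = Dx (Y k).

Lemma E3 : E 3.
Proof. rewrite /E (Yval _ _ _ _ _ 0) X3 X2 Ps1; pushD; ring. Qed.

Lemma E4 : E 4.
Proof. rewrite /E (Yval _ _ _ _ _ 1) (Xrec _ _ _ _ _ 0) X3 X2 Ps1 Ps2; pushD; ring. Qed.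

Lemma E5 : E 5.
Proof.
have hx3 : Dx (Ps 3) = U + V by rewrite (DxPsi (j:=3)) ?X3 // hN.
rewrite /E (Yval _ _ _ _ _ 2) (Xrec _ _ _ _ _ 1) (Xrec _ _ _ _ _ 0) X3 X2 Ps1 Ps2.
move: hx3; generalize (Psi x y ps) => P hx3.
pushD; rewrite hx3; ring.
Qed.

Lemma Estep m : (m.+4.+2 <= N.+2)%N -> E m.+4 -> E m.+4.+1 -> E m.+4.+2.
Proof.
move=> Hm; rewrite /E => IH4 IH5.
have R6 := Xrec x y u v ps m.+2.
have R5 := Xrec x y u v ps m.+1.
have R4 := Xrec x y u v ps m.
have hy3 : Dy (Ps m.+3) = Y m.+3 by rewrite (DyPsi (j:=m.+3)) //; apply/andP; split; lia.
have hx4 : Dx (Ps m.+4) = X m.+4 by rewrite (DxPsi (j:=m.+4)) //; apply/andP; split; lia.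
have hx3 : Dx (Ps m.+3) = X m.+3 by rewrite (DxPsi (j:=m.+3)) //; apply/andP; split; lia.
have hx2 : Dx (Ps m.+2) = X m.+2 by rewrite (DxPsi (j:=m.+2)) //; apply/andP; split; lia.
rewrite (Yval _ _ _ _ _ m.+3).
rewrite (Yval _ _ _ _ _ m.+2) in IH5.
rewrite (Yval _ _ _ _ _ m.+1) in IH4.
rewrite (Yval _ _ _ _ _ m) in hy3.
move: R6 R5 R4 IH4 IH5 hx4 hx3 hx2 hy3.
generalize (Xk x y U V ps) => Z.
generalize (Psi x y ps) => P.
move=> R6 R5 R4 IH4 IH5 hx4 hx3 hx2 hy3.
rewrite R6; pushD.
rewrite IH4 IH5 hy3 R5; pushD.
rewrite hx4 hx3 hx2.
set a := Dx (Z m.+4); set b := Dx (Z m.+3).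
rewrite R4.
ring.
Qed.

Lemma Eall k : (3 <= k <= N.+2)%N -> E k.
Proof.
case/andP=> H3 HN.
suff H : forall m, (m.+3 <= N.+2)%N -> E m.+3.
  have := H (k - 3)%N; have -> : (k - 3).+3 = k by lia.
  by apply.
move=> m; elim/ltn_ind: m => m IH Hm.
case: m IH Hm => [|[|[|m]]] IH Hm; [exact: E3 | exact: E4 | exact: E5 |].
apply: Estep => //; [apply: (IH m.+1) | apply: (IH m.+2)]; lia.
Qed.

End Step.

Lemma commP (A : comUnitRingType) (P : nat -> bool) (x y : A) (u v ps : nat -> A) (Dx Dy : A -> A) :
  total_derivatives P x y u v ps Dx Dy ->
  (forall k, P k -> exists N, [/\ (3 <= N)%N, (3 <= k <= N.+2)%N & forall j, (3 <= j <= N)%N -> P j]) ->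
  commute_on_coords P x y u v ps Dx Dy.
Proof.
case=> [[Dxd Dyd] Hunit Hxy [Hu Hv Hyu Hyv] Hps] HP.
have [Dxx Dxy Dyx Dyy] := Hxy.
split.
- by rewrite Dyx Dxx (D0 Dxd) (D1 Dyd).
- by rewrite Dyy Dxy (D0 Dyd) (D1 Dxd).
- by move=> i; rewrite Hyu Hu Hyu.
- by move=> i; rewrite Hyv Hv Hyv.
move=> k Pk; rewrite (Hps k Pk).1 (Hps k Pk).2.
have [N [hN Hk HPN]] := HP k Pk.
symmetry.
apply: (@Eall A x y u v ps Dx Dy Dxd Dyd Hunit Hxy (Hu 0%N) (Hv 0%N) (Hyu 0%N) (Hyv 0%N) N hN) => //.
by move=> j /HPN /Hps.
Qed.

Theorem mainTheorem5 :
  (forall (k : nat), (2 <= k)%N ->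
     forall (A : comUnitRingType) (x y : A) (u v ps : nat -> A) (Dx Dy : A -> A),
       total_derivatives (Ek_index k) x y u v ps Dx Dy ->
       commute_on_coords (Ek_index k) x y u v ps Dx Dy) /\
  (forall (A : comUnitRingType) (x y : A) (u v ps : nat -> A) (Dx Dy : A -> A),
       total_derivatives Estar_index x y u v ps Dx Dy ->
       commute_on_coords Estar_index x y u v ps Dx Dy).
Proof.
split.
- move=> K HK A x y u v ps Dx Dy H; apply: (commP H) => k Pk.
  exists K.+1; rewrite /Ek_index in Pk *; split => //; lia.
- move=> A x y u v ps Dx Dy H; apply: (commP H) => k Pk.
  exists k; rewrite /Estar_index in Pk *; split => //; first lia.
  by move=> j /andP [].
Qed.
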